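(* $KU^+_1(\mathcal{O}(S^2_q))$ is non-trivial.
   Context: $q$ is the deformation parameter (a real number). The standard Podleś sphere $\mathcal{O}(S^2_q)$ is the algebra generated by $z_{-1},z_0,z_1$ subject to $z_0^2-qz_1z_{-1}-q^{-1}z_{-1}z_1=1$, $(1-q^2)z_0^2+qz_{-1}z_1-qz_1z_{-1}=0$, $z_{-1}z_0=q^2z_0z_{-1}$, $z_0z_1=q^2z_1z_0$, with $*$-structure $z_i^*=(-q)^iz_{-i}$ ($i=-1,0,1$). For a $*$-algebra $\mathcal{A}$ and $\epsilon=\pm1$, $U^\epsilon_n(\mathcal{A})$ is the group of $2n\times2n$ matrices $M=\begin{pmatrix}A&B\\C&D\end{pmatrix}$ over $\mathcal{A}$ with $M^\star M=MM^\star=I_{2n}$, where $M^\star=\begin{pmatrix}D^\dagger&\epsilon B^\dagger\\ \epsilon C^\dagger&A^\dagger\end{pmatrix}$ and $\dagger$ is the transpose composed with entrywise $*$; $U^\epsilon(\mathcal{A})=\mathrm{colim}_nU^\epsilon_n(\mathcal{A})$. The Hermitian $K$-group $KU^\epsilon_1(\mathcal{A})=\pi_1(BU^\epsilon(\mathcal{A})^+)$ (Quillen plus construction) is the abelianization $U^\epsilon(\mathcal{A})/[U^\epsilon(\mathcal{A}),U^\epsilon(\mathcal{A})]$. Here $KU^+_1$ denotes $KU^\epsilon_1$ with $\epsilon=+1$. *)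

(* Defs.v *)
From HB Require Import structures.
From mathcomp Require Import all_boot all_order all_algebra.
From mathcomp Require Import complex.
From mathcomp Require Import reals.
Set Implicit Arguments. Unset Strict Implicit. Unset Printing Implicit Defensive.
Import Order.TTheory GRing.Theory Num.Theory.
Local Open Scope ring_scope.

Section Defs.
Variable R : realType.
Local Notation C := (R[i]).

Definition is_star (A : algType C) (s : A -> A) : Prop :=
  [/\ forall x y, s (x + y) = s x + s y,
      forall x y, s (x * y) = s y * s x,
      forall x, s (s x) = x &
      forall (c : C) x, s (c *: x) = conjc c *: s x].

(* the defining relations and *-structure of the standard Podles sphere;
   zm, z0, z1 stand for z_{-1}, z_0, z_1 *)
Definition podles_rels (q : R) (A : algType C) (s : A -> A) (zm z0 z1 : A) : Prop :=
  [/\ z0 ^+ 2 - (q%:C)%C *: (z1 * zm) - (q^-1%:C)%C *: (zm * z1) = 1,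
      ((1 - q ^+ 2)%:C)%C *: z0 ^+ 2 + (q%:C)%C *: (zm * z1) - (q%:C)%C *: (z1 * zm) = 0,
      zm * z0 = ((q ^+ 2)%:C)%C *: (z0 * zm),
      z0 * z1 = ((q ^+ 2)%:C)%C *: (z1 * z0) &
      [/\ s zm = ((- q)^-1%:C)%C *: z1, s z0 = z0 & s z1 = ((- q)%:C)%C *: zm]].

Definition podles_hom (A B : algType C) (sA : A -> A) (sB : B -> B)
  (zm z0 z1 : A) (wm w0 w1 : B) (f : A -> B) : Prop :=
  [/\ forall x y, f (x + y) = f x + f y,
      forall x y, f (x * y) = f x * f y,
      f 1 = 1,
      forall (c : C) x, f (c *: x) = c *: f x &
      [/\ forall x, f (sA x) = sB (f x), f zm = wm, f z0 = w0 & f z1 = w1]].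

Definition is_podles_sphere (q : R) (A : algType C) (s : A -> A) (zm z0 z1 : A)
  : Prop :=
  is_star s /\ podles_rels q s zm z0 z1 /\
  forall (B : algType C) (sB : B -> B) (wm w0 w1 : B),
    is_star sB -> podles_rels q sB wm w0 w1 ->
    exists f : A -> B, podles_hom s sB zm z0 z1 wm w0 w1 f /\
      forall g : A -> B, podles_hom s sB zm z0 z1 wm w0 w1 g -> g =1 f.

Definition mxdag (A : algType C) (s : A -> A) m n (M : 'M[A]_(m, n)) : 'M[A]_(n, m) :=
  map_mx s M^T.

Definition mxstar (A : algType C) (s : A -> A) (eps : A) n (M : 'M[A]_(n + n))
  : 'M[A]_(n + n) :=
  block_mx (mxdag s (drsubmx M)) (eps *: mxdag s (ursubmx M))
           (eps *: mxdag s (dlsubmx M)) (mxdag s (ulsubmx M)).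

Definition unitary_eps (A : algType C) (s : A -> A) (eps : A) n (M : 'M[A]_(n + n))
  : Prop :=
  mxstar s eps M *m M = 1%:M /\ M *m mxstar s eps M = 1%:M.

Definition stab (A : algType C) n k (M : 'M[A]_(n + n)) : 'M[A]_((n + k) + (n + k)) :=
  block_mx (block_mx (ulsubmx M) 0 0 1%:M) (block_mx (ursubmx M) 0 0 0)
           (block_mx (dlsubmx M) 0 0 0) (block_mx (drsubmx M) 0 0 1%:M).

(* M is a product of commutators of elements of U^eps_N(A);
   the inverse of a unitary g is mxstar g *)
Definition comm_prod (A : algType C) (s : A -> A) (eps : A) N (M : 'M[A]_(N + N))
  : Prop :=
  exists l : seq ('M[A]_(N + N) * 'M[A]_(N + N)),
    (forall p, p \in l -> unitary_eps s eps p.1 /\ unitary_eps s eps p.2) /\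
    M = foldr (fun p acc => p.1 *m p.2 *m mxstar s eps p.1 *m mxstar s eps p.2 *m acc)
              1%:M l.

(* KU^eps_1(A) = U^eps(A)/[U^eps(A),U^eps(A)] is non-trivial: some element of
   the colimit U^eps(A) is not in its commutator subgroup *)
Definition KU1_nontrivial (A : algType C) (s : A -> A) (eps : A) : Prop :=
  exists n (M : 'M[A]_(n + n)),
    unitary_eps s eps M /\ forall k, ~ comm_prod s eps (stab k M).

End Defs.

(* Main.v *)
Require Import Defs.
From HB Require Import structures.
From mathcomp Require Import all_boot all_order all_algebra.
From mathcomp Require Import complex.
From mathcomp Require Import reals.
From mathcomp Require Import ring.
Local Open Scope ring_scope.
Import Order.TTheory GRing.Theory Num.Theory.

Section Aux.
Variable R : realType.
Local Notation C := (R[i]).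

Lemma star1 (A : algType C) (s : A -> A) : is_star s -> s 1 = 1.
Proof.
case=> _ hM hK _.
have h := hM 1 (s 1); rewrite mul1r hK mul1r in h.
by rewrite -h.
Qed.

Lemma star0 (A : algType C) (s : A -> A) : is_star s -> s 0 = 0.
Proof.
case=> hD _ _ _; have h := hD 0 0; rewrite addr0 in h.
by apply/eqP; rewrite -(addrI _ (etrans (addr0 _) h)).
Qed.

Section Hom.
Variables (A B : algType C) (s : A -> A) (t : B -> B) (f : A -> B).
Hypotheses (fD : forall x y, f (x + y) = f x + f y)
  (fM : forall x y, f (x * y) = f x * f y) (f1 : f 1 = 1)
  (fs : forall x, f (s x) = t (f x)).

Lemma f0 : f 0 = 0.
Proof.
have h := fD 0 0; rewrite addr0 in h.
by apply/eqP; rewrite -(addrI _ (etrans (addr0 _) h)).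
Qed.

Lemma f_sum (I : Type) (r : seq I) (F : I -> A) :
  f (\sum_(i <- r) F i) = \sum_(i <- r) f (F i).
Proof. exact: (big_morph f fD f0). Qed.

Lemma map_mulmx m n p (X : 'M[A]_(m, n)) (Y : 'M[A]_(n, p)) :
  map_mx f (X *m Y) = map_mx f X *m map_mx f Y.
Proof.
apply/matrixP=> i j; rewrite !mxE f_sum; apply: eq_bigr => k _.
by rewrite fM !mxE.
Qed.

Lemma map_1 n : map_mx f (1%:M : 'M[A]_n) = 1%:M.
Proof. by apply/matrixP=> i j; rewrite !mxE; case: (i == j); rewrite ?f1 ?f0. Qed.

Lemma map_mxstar n (M : 'M[A]_(n + n)) :
  map_mx f (mxstar s 1 M) = mxstar t 1 (map_mx f M).
Proof.
rewrite /mxstar !scale1r map_block_mx /mxdag.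
rewrite -map_ulsubmx -map_ursubmx -map_dlsubmx -map_drsubmx.
by congr block_mx; apply/matrixP=> i j; rewrite !mxE fs.
Qed.

Lemma map_unitary n (M : 'M[A]_(n + n)) :
  unitary_eps s 1 M -> unitary_eps t 1 (map_mx f M).
Proof.
case=> h1 h2; split.
  by rewrite -map_mxstar -map_mulmx h1 map_1.
by rewrite -map_mxstar -map_mulmx h2 map_1.
Qed.

Lemma map_comm_prod n (M : 'M[A]_(n + n)) :
  comm_prod s 1 M -> comm_prod t 1 (map_mx f M).
Proof.
case=> l [hl ->].
exists [seq (map_mx f p.1, map_mx f p.2) | p <- l]; split.
  move=> p /mapP [p' hp' ->] /=.
  by case: (hl p' hp') => u1 u2; split; apply: map_unitary.
elim: l hl => [|p l IH] hl /=; first exact: map_1.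
rewrite !map_mulmx !map_mxstar IH // => p' hp'.
by apply: hl; rewrite in_cons hp' orbT.
Qed.

End Hom.

Definition cj : C^o -> C^o := @conjc R.

Lemma aux4 (K : comPzRingType) (a b c d : K) :
  c * a = 1 -> d * b = 1 -> a * b * c * d = 1.
Proof.
move=> h1 h2; rewrite -mulrA mulrACA [a * c]mulrC [b * d]mulrC h1 h2 mulr1 //.
Qed.

Lemma comm_prod_det n (M : 'M[C^o]_(n + n)) :
  comm_prod cj 1 M -> \det M = 1.
Proof.
case=> l [hl ->].
elim: l hl => [|p l IH] hl /=; first by rewrite det1.
have [[u1 _] [u2 _]] := hl p (mem_head _ _).
have d1 := congr1 determinant u1; have d2 := congr1 determinant u2.
rewrite det_mulmx det1 in d1; rewrite det_mulmx det1 in d2.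
rewrite !det_mulmx IH; last by move=> p' hp'; apply: hl; rewrite in_cons hp' orbT.
rewrite mulr1; exact: aux4.
Qed.

Lemma stab_scalar (A : algType C) n k (c : A) :
  stab k (c%:M : 'M[A]_(n + n)) =
  block_mx (block_mx c%:M 0 0 1%:M) 0 0 (block_mx c%:M 0 0 1%:M).
Proof.
rewrite /stab (scalar_mx_block n n c).
by rewrite block_mxKul block_mxKur block_mxKdl block_mxKdr !block_mx0.
Qed.

End Aux.

Section T.
Variable R : realType.
Local Notation C := (R[i]).

Lemma cj_star : is_star (cj R).
Proof.
rewrite /cj; split.
- by move=> x y; apply: (raddfD (@conjc R)).
- by move=> x y; rewrite (rmorphM (@conjc R)) mulrC.
- exact: conjcK.
- by move=> c x; apply: (rmorphM (@conjc R)).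
Qed.

Lemma cj_rels (q : R) (hq : q != 0) :
  let a := (Num.sqrt (1 + q ^+ 2))^-1 in
  podles_rels q (cj R) ((a%:C)%C : C^o) 0 (((- q * a)%:C)%C : C^o).
Proof.
move=> a.
have ha : a ^+ 2 * (1 + q ^+ 2) = 1.
  rewrite /a exprVn sqr_sqrtr ?mulVf //.
    by rewrite gt_eqF // ltr_pwDl // ?ltr01 ?sqr_ge0 // addr_gt0.
  by rewrite addr_ge0 ?sqr_ge0.
split.
- rewrite /GRing.scale /=; apply/eqP; rewrite eq_complex /=; apply/andP; split; apply/eqP; rewrite ?(mul0r, mulr0, subr0, add0r, addr0, sub0r, oppr0) //.
  rewrite -ha; field; exact: hq.
- rewrite /GRing.scale /=; apply/eqP; rewrite eq_complex /=; apply/andP; split; apply/eqP; rewrite ?(mul0r, mulr0, subr0, add0r, addr0, sub0r, oppr0) //.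
  by field.
- by rewrite mulr0 mul0r scaler0.
- by rewrite mulr0 mul0r scaler0.
- split.
  + rewrite /GRing.scale /= /cj; apply/eqP; rewrite eq_complex /=; apply/andP; split; apply/eqP; rewrite ?(mul0r, mulr0, subr0, add0r, addr0, sub0r, oppr0) //.
    by field.
  + by rewrite /cj conjc0.
  + rewrite /GRing.scale /= /cj; apply/eqP; rewrite eq_complex /=; apply/andP; split; apply/eqP; rewrite ?(mul0r, mulr0, subr0, add0r, addr0, sub0r, oppr0) //.
Qed.
End T.

Section U.
Variable R : realType.
Local Notation C := (R[i]).

Lemma map_scalar (A B : algType C) (f : A -> B) n (x : A) :
  f 0 = 0 -> map_mx f (x%:M : 'M_n) = (f x)%:M.
Proof. by move=> f0; apply/matrixP=> i j; rewrite !mxE; case: (i == j). Qed.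

Lemma map_zero (A B : algType C) (f : A -> B) m n :
  f 0 = 0 -> map_mx f (0 : 'M_(m, n)) = 0.
Proof. by move=> f0; apply/matrixP=> i j; rewrite !mxE. Qed.

Lemma unitary_scalar (A : algType C) (s : A -> A) (hs : is_star s) n (c : C) :
  conjc c * c = 1 -> unitary_eps s 1 ((c *: (1 : A))%:M : 'M[A]_(n + n)).
Proof.
move=> hc.
have s0 := @star0 R A s hs; have s1 := @star1 R A s hs.
have hsx : s (c *: 1) = conjc c *: 1 by case: hs => _ _ _ ->; rewrite s1.
have E : mxstar s 1 ((c *: (1 : A))%:M : 'M[A]_(n + n)) = (conjc c *: (1 : A))%:M.
  rewrite /mxstar (scalar_mx_block n n (c *: (1 : A))).
  rewrite block_mxKul block_mxKur block_mxKdl block_mxKdr !scale1r.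
  rewrite [in RHS](scalar_mx_block n n).
  have D0 : forall m, mxdag s (0 : 'M[A]_(m, m)) = 0.
    by move=> m; apply/matrixP=> i j; rewrite !mxE s0.
  have Dc : mxdag s ((c%:A)%:M : 'M[A]_n) = ((c^*)%C%:A)%:M.
    by apply/matrixP=> i j; rewrite !mxE eq_sym; case: (i == j); rewrite ?hsx ?s0.
  by rewrite !D0 Dc.
rewrite /unitary_eps E -!scalar_mxM -!scalerAl !mul1r !scalerA hc mulrC hc scale1r.
by split.
Qed.

End U.

Theorem theorem6p3 (R : realType) (q : R) (hq : q != 0)
  (A : algType (R[i])) (s : A -> A) (zm z0 z1 : A) :
  is_podles_sphere q s zm z0 z1 -> KU1_nontrivial s 1.
Proof.
move=> [hs [hrel hU]].
have [f [[fD fM f1 fZ [fs _ _ _]] _]] := hU _ _ _ _ _ (cj_star R) (@cj_rels R q hq).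
have f0 := @f0 R A _ f fD.
have hi : conjc ('i : R[i])%C * 'i%C = 1 by simpc.
exists 1%N, ((('i%C : R[i]) *: (1 : A))%:M); split; first exact: (@unitary_scalar R A s hs 1 _ hi).
move=> k hc.
have := @comm_prod_det R _ _ (@map_comm_prod R A _ s _ f fD fM f1 fs _ _ hc).
rewrite stab_scalar !map_block_mx !map_zero // !map_scalar // f1 fZ f1.
rewrite !det_lblock !det_scalar1.
rewrite det1 /GRing.scale /= => /eqP; rewrite eq_complex /=.
rewrite !(mul0r, mulr0, mul1r, mulr1, subr0, add0r, addr0, sub0r) => /andP [/eqP h _].
move: h; rewrite oppr0 mul0r sub0r => /eqP; rewrite eq_sym -addr_eq0.
by rewrite -(natrD _ 1 1) Num.Theory.pnatr_eq0.
Qed.
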